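(* Let the Algorithm and assumptions (A1)–(A4) be as in the context, with constants $L_H,K_H,\delta_g,\delta_H,\nu$. Let $k$ be an iteration at which the algorithm has not stopped, and suppose $\sigma_k\ge 2L_H$ and $\delta_g\le\frac{9\delta_H^2}{4\sigma_k}$. If either (a) $\|G_k\|>\varepsilon_g$ and $\delta_H\le\min\{\frac1{18},\frac{1-\rho_{TH}}{9}\}\big(\sqrt{K_H^2+4\sigma_k\varepsilon_g}-K_H\big)$, or (b) $\lambda_{\min}(H_k)<-\varepsilon_H$ and $\delta_H\le\min\{\frac19,\frac{2(1-\rho_{TH})}{9}\}\nu\varepsilon_H$, then $\rho_k\ge\rho_{TH}$, so that $\sigma_{k+1}=\sigma_k/\gamma$.
   Context: Let $\mathcal M$ be a connected complete Riemannian manifold; $\langle\cdot,\cdot\rangle$ and $\|\cdot\|$ denote the inner product and norm on tangent spaces $T_x\mathcal M$. Let $f=\frac1n\sum_{i=1}^n f_i$ with each $f_i:\mathcal M\to\mathbb R$ twice continuously differentiable; $\mathrm{grad} f$ is the Riemannian gradient. A retraction is a smooth map $R:T\mathcal M\to\mathcal M$ whose restriction $R_x$ to $T_x\mathcal M$ satisfies $R_x(0_x)=x$, $DR_x(0_x)=\mathrm{Id}$. $\nabla^2 f\circ R_x(0_x)$ is the Hessian at $0_x$ of $f\circ R_x$ on the inner-product space $T_x\mathcal M$ (a self-adjoint operator). For a self-adjoint operator $H$ on a tangent space, $\lambda_{\min}(H)$ is its smallest eigenvalue. Algorithm: fix $\varepsilon_g,\varepsilon_H,\rho_{TH}\in(0,1)$,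 $\gamma>1$, $x_0\in\mathcal M$, $\sigma_0>0$. At iteration $k$: construct $G_k\in T_{x_k}\mathcal M$ and self-adjoint linear $H_k$ on $T_{x_k}\mathcal M$; if $\|G_k\|\le\varepsilon_g$ and $\lambda_{\min}(H_k)\ge-\varepsilon_H$, stop; otherwise choose $\eta_k\in T_{x_k}\mathcal M$ approximately minimizing $m_k(\eta):=\langle G_k,\eta\rangle+\frac12\langle H_k[\eta],\eta\rangle+\frac13\sigma_k\|\eta\|^3$, set $\rho_k=\frac{f(x_k)-f\circ R_{x_k}(\eta_k)}{-m_k(\eta_k)}$; if $\rho_k\ge\rho_{TH}$ set $x_{k+1}=R_{x_k}(\eta_k)$, $\sigma_{k+1}=\sigma_k/\gamma$, else $x_{k+1}=x_k$, $\sigma_{k+1}=\gamma\sigma_k$. Cauchy point and eigenpoint: $\eta_k^C:=-\alpha^C G_k$ with $\alpha^C\in\arg\min_{\alpha\ge0}m_k(-\alpha G_k)$. Fix $\nu\in(0,1)$. When $\lambda_{\min}(H_k)<0$, $\eta_k^E:=\alpha^E u_k$ where $u_k\in T_{x_k}\mathcal M$ satisfies $\langle u_k,H_k[u_k]\rangle\le\nu\lambda_{\min}(H_k)\|u_k\|^2<0$ and $\langle G_k,u_k\rangle\le0$, and $\alpha^E\in\arg\min_{\alpha\ge0}m_k(\alpha u_k)$ (so $\langle\eta_k^E,H_k[\eta_k^E]\rangle\le\nu\lambda_{\min}(H_k)\|\eta_k^E\|^2$). Assumptions: (A1) there is $L_H>0$ with $\big|f\circ R_{x_k}(\eta_k)-f(x_k)-\langle\mathrm{grad}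 f(x_k),\eta_k\rangle-\frac12\langle\nabla^2 f\circ R_{x_k}(0_{x_k})[\eta_k],\eta_k\rangle\big|\le\frac12L_H\|\eta_k\|^3$ for all $k$. (A2) there is $K_H>0$ with $\|H_k\|:=\sup_{\eta\in T_{x_k}\mathcal M,\|\eta\|\le1}\langle\eta,H_k[\eta]\rangle\le K_H$ for all $k$. (A3) there are $\delta_g,\delta_H\in(0,1)$ with $\|G_k-\mathrm{grad} f(x_k)\|\le\delta_g$ and $\|(H_k-\nabla^2 f\circ R_{x_k}(0_{x_k}))[\eta_k]\|\le\delta_H\|\eta_k\|$ for all $k$. (A4) for all $k$, $-m_k(\eta_k)\ge-m_k(\eta_k^C)$, and $-m_k(\eta_k)\ge-m_k(\eta_k^E)$ whenever $\lambda_{\min}(H_k)<0$. *)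

(* Defs.v *)
(* One iteration k of the Riemannian adaptive-regularization
   method, stated on the inner-product space T_{x_k}M, identified (via an
   orthonormal basis) with 'rV[R]_n and the Euclidean inner product. *)
From mathcomp Require Import all_boot all_order all_algebra.
From mathcomp Require Import reals.
Set Implicit Arguments. Unset Strict Implicit. Unset Printing Implicit Defensive.
Import Order.TTheory GRing.Theory Num.Theory.
Local Open Scope ring_scope.

Section Defs.
Variables (R : realType) (n : nat).

Definition ip (u v : 'rV[R]_n) : R := (u *m v^T) 0 0.
Definition vnorm (u : 'rV[R]_n) : R := Num.sqrt (ip u u).
Definition app (A : 'M[R]_n) (u : 'rV[R]_n) : 'rV[R]_n := u *m A^T.
Definition selfadj (A : 'M[R]_n) : Prop := A^T = A.
Definition is_lambda_min (A : 'M[R]_n) (l : R) : Prop :=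
  eigenvalue A l /\ forall m, eigenvalue A m -> l <= m.
Definition model (G : 'rV[R]_n) (H : 'M[R]_n) (sigma : R) (eta : 'rV[R]_n) : R :=
  ip G eta + 2^-1 * ip (app H eta) eta + 3^-1 * sigma * vnorm eta ^+ 3.
Definition is_argmin_nonneg (phi : R -> R) (a : R) : Prop :=
  0 <= a /\ forall b, 0 <= b -> phi a <= phi b.
(* operator "norm" of (A2): sup_{||eta||<=1} <eta, A[eta]> <= K *)
Definition opnorm_le (A : 'M[R]_n) (K : R) : Prop :=
  forall eta, vnorm eta <= 1 -> ip eta (app A eta) <= K.
Definition sigma_next (rho rhoTH gamma sigma : R) : R :=
  if rhoTH <= rho then sigma / gamma else gamma * sigma.
End Defs.

(* Main.v *)
Require Import Defs.
From mathcomp Require Import all_boot all_order all_algebra.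
From mathcomp Require Import reals.
From mathcomp Require Import ring lra.
Import Order.TTheory GRing.Theory Num.Theory.
Local Open Scope ring_scope.
Section S.
Set Implicit Arguments.
Variables (R : realType) (n : nat).
Implicit Types (u v w : 'rV[R]_n).
Lemma ipE u v : ip u v = \sum_j u 0 j * v 0 j.
Proof. by rewrite /ip !mxE; apply: eq_bigr => j _; rewrite mxE. Qed.
Lemma ipC u v : ip u v = ip v u.
Proof. by rewrite !ipE; apply: eq_bigr => j _; rewrite mulrC. Qed.
Lemma ipBl u v w : ip (u - v) w = ip u w - ip v w.
Proof. by rewrite !ipE -sumrB; apply: eq_bigr => j _; rewrite !mxE mulrBl. Qed.
Lemma ipBr u v w : ip w (u - v) = ip w u - ip w v.
Proof. by rewrite ipC ipBl !(ipC w). Qed.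
Lemma ipNl u w : ip (- u) w = - ip u w.
Proof. by rewrite !ipE -sumrN; apply: eq_bigr => j _; rewrite !mxE mulNr. Qed.
Lemma ipZl a u w : ip (a *: u) w = a * ip u w.
Proof. by rewrite !ipE mulr_sumr; apply: eq_bigr => j _; rewrite !mxE mulrA. Qed.
Lemma ipZr a u w : ip w (a *: u) = a * ip w u.
Proof. by rewrite ipC ipZl ipC. Qed.
Lemma ipNr u w : ip w (- u) = - ip w u.
Proof. by rewrite ipC ipNl ipC. Qed.
Lemma ip_ge0 u : 0 <= ip u u.
Proof. by rewrite ipE; apply: sumr_ge0 => j _; rewrite -expr2 sqr_ge0. Qed.
Lemma appB (A B : 'M[R]_n) u : app (A - B) u = app A u - app B u.
Proof. by rewrite /app linearB /= mulmxBr. Qed.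
Lemma appZ (A : 'M[R]_n) a u : app A (a *: u) = a *: app A u.
Proof. by rewrite /app scalemxAl. Qed.
Lemma vnorm_ge0 u : 0 <= vnorm u.
Proof. exact: sqrtr_ge0. Qed.
Lemma vnormZ a u : vnorm (a *: u) = `|a| * vnorm u.
Proof. by rewrite /vnorm ipZl ipZr mulrA -expr2 sqrtrM ?sqr_ge0 // sqrtr_sqr. Qed.
Lemma vnormN u : vnorm (- u) = vnorm u.
Proof. by rewrite /vnorm ipNl ipNr opprK. Qed.
Lemma vnorm_sqr u : vnorm u ^+ 2 = ip u u.
Proof. by rewrite /vnorm sqr_sqrtr // ip_ge0. Qed.
Lemma ip_cs u v : ip u v <= vnorm u * vnorm v.
Proof.
have key s : 0 <= s ^+ 2 * ip u u - 2 * s * ip u v + ip v v.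
  have := ip_ge0 (s *: u - v).
  rewrite !ipBl !ipBr !ipZl !ipZr (ipC v u).
  by move=> h; lra.
have hA := ip_ge0 u; have hB := ip_ge0 v.
case: (lerP (ip u v) 0) => hC.
  by apply: le_trans hC _; rewrite mulr_ge0 // vnorm_ge0.
have [A0|Apos] := eqVneq (ip u u) 0.
  have := key ((ip v v + 1) / (2 * ip u v)).
  rewrite A0 mulr0 add0r.
  have -> : 2 * ((ip v v + 1) / (2 * ip u v)) * ip u v = ip v v + 1.
    by field; rewrite gt_eqF.
  lra.
have Ap : 0 < ip u u by rewrite lt_neqAle eq_sym Apos hA.
have := key (ip u v / ip u u).
have -> : (ip u v / ip u u) ^+ 2 * ip u u - 2 * (ip u v / ip u u) * ip u v
   = - (ip u v ^+ 2 / ip u u) by field; rewrite gt_eqF.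
move=> h.
have h2 : ip u v ^+ 2 <= ip u u * ip v v.
  have : ip u v ^+ 2 / ip u u <= ip v v by lra.
  by rewrite ler_pdivrMr // mulrC.
rewrite /vnorm -sqrtrM // -(ger0_norm (ltW hC)) -sqrtr_sqr.
by rewrite ler_sqrt // mulr_ge0.
Qed.
Lemma ip_cs' u v : - (vnorm u * vnorm v) <= ip u v.
Proof. by have := ip_cs u (- v); rewrite ipNr vnormN; lra. Qed.

Lemma min_mul_le (a b x d : R) : 0 <= x -> d <= Num.min a b * x ->
  d <= a * x /\ d <= b * x.
Proof.
move=> x0 h; split; apply: (le_trans h); apply: ler_wpM2r => //.
  by rewrite ge_min lexx.
by rewrite ge_min lexx orbT.
Qed.

Lemma phi_bound (sigma d dg t : R) : 0 < sigma -> 0 < d -> 0 <= t ->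
  dg <= 9 * d ^+ 2 / (4 * sigma) ->
  12 * sigma ^+ 2 * (dg * t + d / 2 * t ^+ 2 - sigma / 12 * t ^+ 3)
    <= 216 * d ^+ 3.
Proof.
move=> s0 d0 t0; rewrite ler_pdivlMr ?mulr_gt0 // => hdg.
have x0 : 0 <= sigma * t by rewrite mulr_ge0 // ltW.
have h1 : 0 <= (sigma * t - 6 * d) ^+ 2 * (sigma * t + 6 * d).
  by rewrite mulr_ge0 ?sqr_ge0 //; lra.
have h2 : 0 <= d ^+ 2 * (sigma * t) by rewrite mulr_ge0 ?sqr_ge0.
have h3 : 3 * (sigma * t) * (dg * (4 * sigma)) <= 3 * (sigma * t) * (9 * d ^+ 2).
  by rewrite ler_wpM2l // mulr_ge0.
nra.
Qed.
End S.
Arguments ip_cs' {R n}.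
Arguments ip_cs {R n}.
Arguments ipBl {R n}.
Arguments ipBr {R n}.
Arguments ipC {R n}.
Arguments ipZl {R n}.
Arguments ipZr {R n}.
Arguments ipNl {R n}.
Arguments ipNr {R n}.
Arguments appB {R n}.
Arguments appZ {R n}.
Arguments vnormZ {R n}.
Arguments vnormN {R n}.
Arguments vnorm_sqr {R n}.
Arguments vnorm_ge0 {R n}.
Arguments ip_ge0 {R n}.
Arguments ipE {R n}.
Arguments min_mul_le {R}.
Arguments phi_bound {R}.

(* Data at iteration k:
   fx = f(x_k), fR = f(R_{x_k}(eta)), gradf = grad f(x_k),
   Hess = Hess (f o R_{x_k})(0_{x_k}), G = G_k, H = H_k, eta = eta_k,
   sigma = sigma_k, lmin = lambda_min(H_k),
   alphaC = Cauchy step, (u, alphaE) = eigen-direction and eigen-step. *)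
Theorem lemma3p6 (R : realType) (n : nat)
  (eps_g eps_H rhoTH gamma L_H K_H delta_g delta_H nu : R)
  (fx fR sigma lmin alphaC alphaE : R)
  (gradf G eta u : 'rV[R]_n) (Hess H : 'M[R]_n) :
  0 < eps_g < 1 -> 0 < eps_H < 1 -> 0 < rhoTH < 1 -> 1 < gamma ->
  0 < nu < 1 -> 0 < L_H -> 0 < K_H -> 0 < delta_g < 1 -> 0 < delta_H < 1 ->
  0 < sigma ->
  selfadj H -> selfadj Hess -> is_lambda_min H lmin ->
  (* (A1) *)
  `|fR - fx - ip gradf eta - 2^-1 * ip (app Hess eta) eta|
      <= 2^-1 * L_H * vnorm eta ^+ 3 ->
  (* (A2) *)
  opnorm_le H K_H ->
  (* (A3) *)
  vnorm (G - gradf) <= delta_g ->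
  vnorm (app (H - Hess) eta) <= delta_H * vnorm eta ->
  (* (A4), Cauchy point *)
  is_argmin_nonneg (fun a => model G H sigma (- (a *: G))) alphaC ->
  - model G H sigma eta >= - model G H sigma (- (alphaC *: G)) ->
  (* (A4), eigenpoint (when lambda_min(H_k) < 0) *)
  (lmin < 0 ->
     [/\ ip u (app H u) <= nu * lmin * vnorm u ^+ 2,
         ip u (app H u) < 0,
         ip G u <= 0,
         is_argmin_nonneg (fun a => model G H sigma (a *: u)) alphaE &
         - model G H sigma eta >= - model G H sigma (alphaE *: u)]) ->
  (* the algorithm has not stopped at iteration k *)
  ~ (vnorm G <= eps_g /\ lmin >= - eps_H) ->
  sigma >= 2 * L_H ->
  delta_g <= 9 * delta_H ^+ 2 / (4 * sigma) ->
  ((vnorm G > eps_g /\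
      delta_H <= Num.min (1/18) ((1 - rhoTH) / 9)
                   * (Num.sqrt (K_H ^+ 2 + 4 * sigma * eps_g) - K_H))
   \/
   (lmin < - eps_H /\
      delta_H <= Num.min (1/9) (2 * (1 - rhoTH) / 9) * nu * eps_H)) ->
  let rho := (fx - fR) / (- model G H sigma eta) in
  rhoTH <= rho /\ sigma_next rho rhoTH gamma sigma = sigma / gamma.

Proof.
move=> /andP[eg0 eg1] /andP[eH0 eH1] /andP[r0 r1] g1 /andP[nu0 nu1] L0 K0
  /andP[dg0 dg1] /andP[dH0 dH1] s0 _ _ _ A1 A2 A3g A3H [aC0 aCmin] MC Eig _ sL
  dgle cases rho.
set t := vnorm eta.
set M := - model G H sigma eta.
have t0 : 0 <= t by apply: vnorm_ge0.
have hD : - (delta_g * t + delta_H / 2 * t ^+ 2 - sigma / 12 * t ^+ 3)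
           <= fx - fR - M.
  move: A1; rewrite ler_norml => /andP[_ A1'].
  have c1 := ip_cs' (G - gradf) eta; rewrite ipBl -/t in c1.
  have c2 := ip_cs' (app (H - Hess) eta) eta; rewrite appB ipBl -/t in c2.
  have e1 : vnorm (G - gradf) * t <= delta_g * t := ler_wpM2r t0 A3g.
  have e2 : vnorm (app (H - Hess) eta) * t <= delta_H * t * t
    := ler_wpM2r t0 A3H.
  rewrite appB in e2.
  have t3 : 0 <= t ^+ 3 by rewrite exprn_ge0.
  have e3 : 0 <= (sigma - 2 * L_H) * t ^+ 3 by rewrite mulr_ge0 // subr_ge0.
  rewrite -/t in A1'; rewrite /M /model -/t; lra.
have hPhi := @phi_bound R sigma delta_H delta_g t s0 dH0 t0 dgle.
have hM : 0 < M /\ 216 * delta_H ^+ 3 <= 12 * sigma ^+ 2 * ((1 - rhoTH) * M).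
  case: cases => [[gpos dle]|[lneg dle]].
  - set g := vnorm G in gpos *.
    have g0 : 0 < g by apply: lt_trans gpos.
    have hK2 : 0 <= K_H ^+ 2 + 4 * sigma * g.
      by rewrite addr_ge0 ?sqr_ge0 // !mulr_ge0 // ltW.
    set S := Num.sqrt (K_H ^+ 2 + 4 * sigma * g).
    have S0 : 0 <= S by apply: sqrtr_ge0.
    have S2 : S ^+ 2 = K_H ^+ 2 + 4 * sigma * g by rewrite sqr_sqrtr.
    have Se : Num.sqrt (K_H ^+ 2 + 4 * sigma * eps_g) - K_H <= S - K_H.
      rewrite lerD2r ler_sqrt //.
      have : sigma * eps_g <= sigma * g by rewrite ler_wpM2l // ltW.
      lra.
    have SK : K_H < S by nra.
    set beta := (S - K_H) / (2 * sigma).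
    have b0 : 0 < beta by rewrite divr_gt0 ?subr_gt0 // mulr_gt0.
    have Sb : S = 2 * sigma * beta + K_H.
      by rewrite /beta; field; rewrite gt_eqF.
    have gb : 4 * sigma * g = 4 * sigma * (K_H * beta + sigma * beta ^+ 2).
      by rewrite Sb in S2; lra.
    have gb' : g = K_H * beta + sigma * beta ^+ 2.
      by apply: (mulfI (_ : 4 * sigma != 0)) => //; rewrite gt_eqF // mulr_gt0.
    set alpha := beta / g.
    have a0 : 0 <= alpha by rewrite divr_ge0 // ltW.
    have ag : alpha * g = beta by rewrite /alpha; field; rewrite gt_eqF.
    have hQ : ip G (app H G) <= K_H * g ^+ 2.
      have := A2 (g^-1 *: G).
      rewrite vnormZ -/g ger0_norm; last by rewrite invr_ge0 ltW.
      rewrite mulVf ?gt_eqF // lexx.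
      move=> /(_ isT); rewrite appZ ipZl ipZr => h.
      have -> : ip G (app H G) = g ^+ 2 * (g^-1 * (g^-1 * ip G (app H G))).
        by field; rewrite gt_eqF.
      by rewrite mulrC ler_wpM2r // sqr_ge0.
    have ipGG : ip G G = g ^+ 2 by rewrite /g vnorm_sqr.
    have hmC : model G H sigma (- (alpha *: G)) =
        - alpha * g ^+ 2 + 2^-1 * (alpha ^+ 2 * ip G (app H G))
        + 3^-1 * sigma * (alpha * g) ^+ 3.
      rewrite /model -scaleNr appZ !ipZl !ipZr vnormZ normrN ger0_norm //.
      rewrite (ipC (app H G) G) ipGG -/g; ring.
    have hC := aCmin alpha a0.
    have hQ' : alpha ^+ 2 * ip G (app H G) <= alpha ^+ 2 * (K_H * g ^+ 2).
      by rewrite ler_wpM2l // sqr_ge0.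
    have e1 : alpha ^+ 2 * (K_H * g ^+ 2) = K_H * beta ^+ 2.
      by rewrite -ag; ring.
    have e2 : alpha * g ^+ 2 = beta * g by rewrite -ag; ring.
    rewrite ag in hmC.
    have Mlb : 2 / 3 * sigma * beta ^+ 3 <= M.
      have : 0 <= K_H * beta ^+ 2 by rewrite mulr_ge0 // ?sqr_ge0 // ltW.
      have e2' : alpha * g ^+ 2 = K_H * beta ^+ 2 + sigma * beta ^+ 3.
        by rewrite e2 gb'; ring.
      rewrite /M.
      simpl in hC; rewrite hmC in hC; lra.
    have Mpos : 0 < M.
      have : 0 < sigma * beta ^+ 3 by rewrite mulr_gt0 // exprn_gt0.
      lra.
    split => //.
    have rS : 0 <= Num.sqrt (K_H ^+ 2 + 4 * sigma * eps_g) - K_H.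
      have se : 0 <= 4 * sigma * eps_g by rewrite !mulr_ge0 // ltW.
      have q : Num.sqrt (K_H ^+ 2) <= Num.sqrt (K_H ^+ 2 + 4 * sigma * eps_g).
        rewrite ler_sqrt; first lra.
        by rewrite addr_ge0 // sqr_ge0.
      rewrite sqrtr_sqr ger0_norm in q; [lra | exact: ltW].
    have [d1 d2] := min_mul_le _ _ _ _ rS dle.
    have sb0 : 0 < sigma * beta by rewrite mulr_gt0.
    have d1' : delta_H <= sigma * beta / 9 by lra.
    have d2' : delta_H <= (1 - rhoTH) * (sigma * beta) * (2 / 9) by nra.
    have d3 : delta_H * delta_H <= (sigma * beta / 9) * (sigma * beta / 9).
      by rewrite ler_pM // ltW.
    have d4 : delta_H * delta_H * delta_H <=
              (sigma * beta / 9) * (sigma * beta / 9) * ((1 - rhoTH) * (sigma * beta) * (2 / 9)).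
      by rewrite ler_pM // ?mulr_ge0 // ltW.
    have y3 : 0 <= (1 - rhoTH) * (sigma * beta) ^+ 3.
      by apply: mulr_ge0; [lra | apply: exprn_ge0; exact: ltW].
    have : 12 * sigma ^+ 2 * ((1 - rhoTH) * (2 / 3 * sigma * beta ^+ 3))
           <= 12 * sigma ^+ 2 * ((1 - rhoTH) * M).
      apply: ler_wpM2l; first by rewrite mulr_ge0 // sqr_ge0.
      apply: ler_wpM2l => //; lra.
    nra.
  - have lm0 : lmin < 0 by lra.
    have [hu1 hu2 hG [aE0 aEmin] MEle] := Eig lm0.
    set w := vnorm u in hu1.
    have w0 : 0 < w.
      have := vnorm_ge0 u; rewrite -/w le_eqVlt => /orP[/eqP w0|//].
      have := ip_cs' u (app H u); rewrite -/w -w0 mul0r oppr0; lra.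
    set mu := - (nu * lmin).
    have mu0 : 0 < mu by rewrite /mu; nra.
    set alpha := mu / sigma / w.
    have a0 : 0 <= alpha by rewrite !divr_ge0 // ltW.
    have aw : alpha * w = mu / sigma.
      rewrite /alpha; field; apply/andP; split; exact: lt0r_neq0.
    have hC := aEmin alpha a0; simpl in hC.
    have hm : model G H sigma (alpha *: u) =
        alpha * ip G u + 2^-1 * (alpha ^+ 2 * ip u (app H u))
        + 3^-1 * sigma * (alpha * w) ^+ 3.
      rewrite /model appZ !ipZl !ipZr vnormZ ger0_norm // (ipC (app H u) u) -/w.
      ring.
    have h1 : alpha * ip G u <= 0 by nra.
    have h2 : alpha ^+ 2 * ip u (app H u) <= alpha ^+ 2 * (nu * lmin * w ^+ 2).
      by apply: ler_wpM2l => //; rewrite sqr_ge0.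
    have e2 : alpha ^+ 2 * (nu * lmin * w ^+ 2) = - (mu / sigma) ^+ 2 * mu.
      by rewrite -aw /mu; ring.
    rewrite aw in hm.
    have e3 : - (mu / sigma) ^+ 2 * mu * 2^-1 + 3^-1 * sigma * (mu / sigma) ^+ 3
        = - (mu ^+ 3 / (6 * sigma ^+ 2)).
      by field; rewrite gt_eqF.
    have Mlb : mu ^+ 3 / (6 * sigma ^+ 2) <= M by rewrite /M; lra.
    have Mpos : 0 < M.
      by apply: lt_le_trans Mlb; rewrite divr_gt0 ?exprn_gt0 // mulr_gt0 ?exprn_gt0.
    split => //.
    have ne : nu * eps_H <= mu.
      rewrite /mu -mulrN ler_wpM2l ?ltW //; lra.
    rewrite -mulrA in dle.
    have ne0 : 0 <= nu * eps_H by rewrite mulr_ge0 // ltW.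
    have [d1 d2] := min_mul_le _ _ _ _ ne0 dle.
    have d1' : delta_H <= mu / 9 by lra.
    have d2' : delta_H <= (1 - rhoTH) * mu * (2 / 9) by nra.
    have d3 : delta_H * delta_H <= (mu / 9) * (mu / 9).
      by rewrite ler_pM // ltW.
    have d4 : delta_H * delta_H * delta_H <=
              (mu / 9) * (mu / 9) * ((1 - rhoTH) * mu * (2 / 9)).
      by rewrite ler_pM // ?mulr_ge0 // ltW.
    have y3 : 0 <= (1 - rhoTH) * mu ^+ 3.
      by apply: mulr_ge0; [lra | apply: exprn_ge0; exact: ltW].
    have : 12 * sigma ^+ 2 * ((1 - rhoTH) * (mu ^+ 3 / (6 * sigma ^+ 2)))
           <= 12 * sigma ^+ 2 * ((1 - rhoTH) * M).
      apply: ler_wpM2l; first by rewrite mulr_ge0 // sqr_ge0.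
      apply: ler_wpM2l => //; lra.
    have -> : 12 * sigma ^+ 2 * ((1 - rhoTH) * (mu ^+ 3 / (6 * sigma ^+ 2)))
       = 2 * ((1 - rhoTH) * mu ^+ 3) by field; rewrite gt_eqF.
    nra.
case: hM => M0 hM.
have phi_le : delta_g * t + delta_H / 2 * t ^+ 2 - sigma / 12 * t ^+ 3
               <= (1 - rhoTH) * M.
  rewrite -(ler_pM2l (_ : 0 < 12 * sigma ^+ 2)); last by rewrite mulr_gt0 ?exprn_gt0.
  exact: le_trans hPhi hM.
have hr : rhoTH <= rho.
  rewrite /rho -/M ler_pdivlMr //. lra.
by split => //; rewrite /sigma_next hr.
Qed.
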